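(* Let $D$ be an Eulerian digraph (finite, without loops, parallel arcs or digons), let $\mathcal{F}(D)$ be a cycle decomposition of $D$, and let $v\in V(D)$. Let $\mathcal{C}_v\subseteq\mathcal{F}(D)$ be the set of dicycles of $\mathcal{F}(D)$ passing through $v$, and suppose that in the dicycle intersection graph $CI(D)$ associated with $\mathcal{F}(D)$ the set $\mathcal{C}_v$ induces a simple clique corresponding to the single vertex $v$, i.e. any two distinct dicycles in $\mathcal{C}_v$ have $v$ as their unique common vertex. Then $v\in SV(D)$, i.e. $|N^{+2}(v)|\ge|N^{+}(v)|$.
   Context: All digraphs are finite, with no loops, no parallel arcs and no digons (a digon is a pair of arcs $u\to w$, $w\to u$), so every dicycle has length at least $3$. $N^{+}(v)$ is the set of out-neighbours of $v$; $N^{+2}(v)$ is the set of vertices $w\notin N^{+}(v)\cup\{v\}$ such that $u\to w$ is an arc for some $u\in N^{+}(v)$; $SV(D)$ is the set of vertices $v$ with $|N^{+2}(v)|\ge|N^{+}(v)|$. An Eulerian digraph is a (weakly) connected digraph with $d^{+}(x)=d^{-}(x)$ for all vertices $x$. A cycle decomposition $\mathcal{F}(D)$ is a set of dicycles whose arc sets partition $A(D)$. The dicycle intersection graph $CI(D)$ associated with $\mathcal{F}(D)$ is the multigraph with vertex set $\mathcal{F}(D)$ having, for each pair of distinct dicycles $C,C'$ and each vertex of $D$ lying on both, one edge between $C$ and $C'$. *)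

(* Defs.v *)
From mathcomp Require Import all_boot.
Set Implicit Arguments. Unset Strict Implicit. Unset Printing Implicit Defensive.

Section Digraphs.
Variable V : finType.
Variable arc : rel V.

(* no loops (and no parallel arcs, automatically for a relation), no digons *)
Definition simple_digraph : Prop :=
  (forall x, ~~ arc x x) /\ (forall x y, arc x y -> ~~ arc y x).

Definition outN (x : V) : {set V} := [set y | arc x y].
Definition inN (x : V) : {set V} := [set y | arc y x].

Definition outN2 (v : V) : {set V} :=
  [set w | (w \notin outN v) && (w != v) && [exists u, arc v u && arc u w]].

Definition SV : {set V} := [set v | #|outN v| <= #|outN2 v|].

Definition eulerian : Prop :=
  (forall x y : V, connect (fun a b => arc a b || arc b a) x y) /\
  (forall x, #|outN x| = #|inN x|).

Definition dicycle (c : seq V) : bool := [&& c != [::], uniq c & cycle arc c].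

Definition cyc_arc (c : seq V) (u w : V) : bool := (u \in c) && (next c u == w).

Definition cycle_decomposition (F : seq (seq V)) : Prop :=
  (forall c, c \in F -> dicycle c) /\
  (forall u w, arc u w -> count (fun c => cyc_arc c u w) F = 1).

End Digraphs.

(* Main.v *)
Require Import Defs.
From mathcomp Require Import all_boot.

Theorem mainTheorem5 (V : finType) (arc : rel V) (F : seq (seq V)) (v : V) :
  simple_digraph arc ->
  eulerian arc ->
  cycle_decomposition arc F ->
  (* C_v induces a simple clique for v in CI(D): two distinct dicycles of F
     through v meet only at v *)
  (forall i j, i < size F -> j < size F -> i != j ->
     v \in nth [::] F i -> v \in nth [::] F j ->
     forall x, x \in nth [::] F i -> x \in nth [::] F j -> x = v) ->
  v \in SV arc.
Proof.
move=> [noloop nodig] _ [Fcyc Fcount] Hcl.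
pose idx u := find (fun c => cyc_arc c v u) F.
pose cc u := nth [::] F (idx u).
have Hidx : forall u, arc v u ->
   [/\ idx u < size F, v \in cc u, next (cc u) v = u & cycle arc (cc u)].
  move=> u Hvu.
  have Hh : has (fun c => cyc_arc c v u) F by rewrite has_count Fcount.
  have Hlt : idx u < size F by rewrite -has_find.
  have := nth_find [::] Hh; rewrite /cyc_arc => /andP [Hv /eqP Hn].
  have := Fcyc _ (mem_nth [::] Hlt) => /and3P [_ _ Hc].
  by split.
pose f u := next (cc u) u.
have Hf : forall u, arc v u -> [/\ arc u (f u), f u != v & f u \in cc u].
  move=> u Hvu; have [Hlt Hv Hn Hc] := Hidx u Hvu.
  have Hu : u \in cc u by rewrite -{1}Hn mem_next.
  have Ha : arc u (f u) by apply: (next_cycle Hc Hu).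
  split => //; last by rewrite mem_next.
  apply/eqP => E; have := nodig _ _ Hvu; by rewrite -E Ha.
rewrite inE.
have -> : #|outN arc v| = #|f @: outN arc v|.
  rewrite card_in_imset // => u u'; rewrite !inE => Hu Hu' E.
  have [Hl Hv Hn _] := Hidx u Hu; have [Hl' Hv' Hn' _] := Hidx u' Hu'.
  have [_ Hw Hwc] := Hf u Hu; have [_ _ Hwc'] := Hf u' Hu'.
  case: (eqVneq (idx u) (idx u')) => Ei.
    by rewrite -Hn -Hn' /cc Ei.
  move: Hwc'; rewrite -E => Hwc'.
  by have := Hcl _ _ Hl Hl' Ei Hv Hv' _ Hwc Hwc'; move/eqP: Hw.
apply: subset_leq_card; apply/subsetP => w /imsetP [u]; rewrite inE => Hu ->.
have [Ha Hw Hwc] := Hf u Hu.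
have [Hl Hv Hn Hc] := Hidx u Hu.
rewrite inE Hw andbT; apply/andP; split; last by apply/existsP; exists u; rewrite Hu Ha.
rewrite inE; apply/negP => Hvw.
have [Hl' Hv' Hn' _] := Hidx _ Hvw.
have Hwc' : f u \in cc (f u) by rewrite -{1}Hn' mem_next.
case: (eqVneq (idx u) (idx (f u))) => Ei.
  have E : u = f u by rewrite -[LHS]Hn -[RHS]Hn' /cc Ei.
  by have := noloop u; rewrite {2}E Ha.
by have := Hcl _ _ Hl Hl' Ei Hv Hv' _ Hwc Hwc'; move/eqP: Hw.
Qed.
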